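(* Let $p$ be an odd prime. Any transversal of $B_p$ other than the main diagonal $\{(i,i,2i): i\in\mathbb{Z}_p\}$ contains at least $\log_2(p)+1$ triples $(r,c,s)$ with $r\neq c$. Equivalently, any transversal of $B_p$ meets the main diagonal in either $p$ cells or at most $p-\log_2(p)-1$ cells.
   Context: $B_p$ is the Latin square of order $p$ viewed as the set of triples $\{(i,j,i+j \bmod p): i,j\in\mathbb{Z}_p\}$ (row, column, symbol). A transversal of a Latin square of order $p$ is a set of $p$ of its triples that contains each row, each column and each symbol exactly once. The main diagonal consists of the cells $(i,i)$. *)

(* Defs.v *)
From mathcomp Require Import all_boot.
From Stdlib Require Import Reals.
Set Implicit Arguments. Unset Strict Implicit. Unset Printing Implicit Defensive.

Definition triple (p : nat) := ('I_p * 'I_p * 'I_p)%type.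

Definition trow {p} (t : triple p) : 'I_p := t.1.1.
Definition tcol {p} (t : triple p) : 'I_p := t.1.2.
Definition tsym {p} (t : triple p) : 'I_p := t.2.

Definition Bp (p : nat) : {set triple p} :=
  [set t | (tsym t : nat) == ((trow t + tcol t) %% p)%N].

Definition latin_transversal (p : nat) (L T : {set triple p}) : Prop :=
  [/\ T \subset L, #|T| = p,
      forall r : 'I_p, #|[set t in T | trow t == r]| = 1,
      forall c : 'I_p, #|[set t in T | tcol t == c]| = 1 &
      forall s : 'I_p, #|[set t in T | tsym t == s]| = 1].

Definition main_diag (p : nat) : {set triple p} :=
  [set t in Bp p | trow t == tcol t].

Definition off_diag (p : nat) (T : {set triple p}) : {set triple p} :=
  [set t in T | trow t != tcol t].
Arguments latin_transversal p L T : clear implicits.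
Arguments off_diag p T : clear implicits.

(* Main.v *)
Require Import Defs.
From mathcomp Require Import all_boot.
From Stdlib Require Import Reals Lra.

Module Aux.
From mathcomp Require Import all_order all_fingroup all_algebra ring zify.
Set Implicit Arguments. Unset Strict Implicit. Unset Printing Implicit Defensive.
Import GRing.Theory.
Local Open Scope ring_scope.
Delimit Scope nat_scope with N.

Lemma det_split (R : comNzRingType) n (F : 'I_n -> bool -> 'I_n -> R) :
  \det (\matrix_(i, j) (F i false j + F i true j)) =
  \sum_(pi : {ffun 'I_n -> bool}) \det (\matrix_(i, j) F i (pi i) j).
Proof.
transitivity (\sum_(s : 'S_n) \sum_(pi : {ffun 'I_n -> bool})
     (-1) ^+ s * \prod_i F i (pi i) (s i)).
  apply: eq_bigr => s _; rewrite -mulr_sumr; congr (_ * _).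
  rewrite -(bigA_distr_bigA (fun i t => F i t (s i))).
  by apply: eq_bigr => i _; rewrite mxE big_bool /= addrC.
rewrite exchange_big; apply: eq_bigr => pi _; apply: eq_bigr => s _.
by congr (_ * _); apply: eq_bigr => i _; rewrite mxE.
Qed.


Definition IP n (f : 'I_n -> option 'I_n) : 'M[int]_n :=
  \matrix_(i, j) ((i == j)%:R - (f i == Some j)%:R).

Lemma IP_det n (f : 'I_n -> option 'I_n) :
  (\det (IP f) = 0 \/ \det (IP f) = 1) /\
  ((exists d : 'I_n -> nat, forall i j, f i = Some j -> (d j < d i)%N) ->
     \det (IP f) = 1).
Proof.
elim: n f => [|n IH] f.
  by rewrite det_mx00; split; [right|].
case: (boolP [exists i, f i == Some i]) => [/existsP[i /eqP fi]|nA].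
  have -> : \det (IP f) = 0.
    rewrite (expand_det_row _ i) big1 // => j _.
    by rewrite mxE fi /= subrr mul0r.
  by split; [left | case=> d /(_ _ _ fi); rewrite ltnn].
case: (boolP [exists m, [forall i, f i != Some m]]) => [/existsP[m /forallP nm]|nB].
  pose f' (i : 'I_n) := if f (lift m i) is Some k then unlift m k else None.
  have liftE : forall i j, (lift m i == lift m j) = (i == j).
    by move=> i j; apply/eqP/eqP => [/lift_inj|->].
  have E : row' m (col' m (IP f)) = IP f'.
    apply/matrixP => i j; rewrite !mxE.
    rewrite (_ : (lift m i == lift m j) = (i == j)); last first.
      by apply/eqP/eqP => [/lift_inj|->].
    rewrite /f'.
    case Ef: (f (lift m i)) => [k|] //.
    have := nm (lift m i); rewrite Ef => km.
    case: unliftP => [k' Ek|Ek]; last by rewrite Ek eqxx in km.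
    rewrite Ek; case: (k' =P j) => [->|ne]; first by rewrite !eqxx.
    have h1 : (Some k' == Some j) = false by apply/negbTE/eqP; case.
    have h2 : (Some (lift m k') == Some (lift m j)) = false.
      by apply/negbTE/eqP; case=> E; apply: ne; apply: val_inj; move/(congr1 (unbump m)): E; rewrite !bumpK.
    by rewrite h1 h2.
  have [IH1 IH2] := IH f'.
  have dE : \det (IP f) = \det (IP f').
    rewrite (expand_det_col _ m) (bigD1 m) //= big1 ?addr0.
      rewrite mxE eqxx (negbTE (nm m)) subr0 mul1r /cofactor E.
      by rewrite -signr_odd addnn odd_double expr0 mul1r.
    by move=> i ne; rewrite mxE (negbTE ne) (negbTE (nm i)) subrr mul0r.
  rewrite dE; split => //; case=> d Hd; apply: IH2.
  exists (fun i => d (lift m i)) => i j.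
  rewrite /f'; case Ef: (f (lift m i)) => [k|] //.
  case: unliftP => [k' Ek|] // [Ej]; apply: Hd; by rewrite Ef Ek Ej.
have surj : forall m, exists i, f i = Some m.
  move=> m; move/existsPn: nB => /(_ m) /forallPn [i]; rewrite negbK => /eqP.
  by exists i.
pose g i := odflt i (f i).
have /fin_all_exists [h gh] : forall m : 'I_n.+1, exists i, g i = m.
  by move=> m; have [i fi] := surj m; exists i; rewrite /g fi.
have hinj : injective h by apply: (can_inj gh).
have [h' hh' h'h] := injF_bij hinj.
have ginj : injective g.
  have gE : forall x, g x = h' x by move=> x; rewrite -{1}(h'h x) gh.
  by move=> x y; rewrite !gE; apply: (can_inj h'h).
have ftot : forall i, f i = Some (g i).
  move=> i; rewrite /g; case Ef: (f i) => [k|] //=.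
  have [i' fi'] := surj i.
  have : g i' = g i by rewrite /g fi' Ef.
  move/ginj => ii'; rewrite ii' in fi'.
  by move/existsPn: nA => /(_ i); rewrite fi' eqxx.
have det0 : \det (IP f) = 0.
  pose v : 'rV[int]_n.+1 := const_mx 1.
  have vA : v *m IP f = 0.
    apply/rowP => j; rewrite !mxE.
    rewrite (eq_bigr (fun i => (i == j)%:R - (f i == Some j)%:R)); last first.
      by move=> i _; rewrite !mxE mul1r.
    rewrite sumrB (bigD1 j) //= eqxx big1 ?addr0; last first.
      by move=> i /negbTE ->.
    have [i0 fi0] := surj j.
    rewrite (bigD1 i0) //= fi0 eqxx big1 ?addr0 ?subrr //.
    have gi0 : g i0 = j by move: fi0; rewrite ftot => -[].
    move=> i ne; rewrite ftot; case: eqP => // -[gij]; case/eqP: ne.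
    by apply: ginj; rewrite gij gi0.
  have := congr1 (mulmx^~ (\adj (IP f))) vA.
  rewrite mul0mx -mulmxA mul_mx_adj mul_mx_scalar => /rowP/(_ ord0).
  by rewrite !mxE mulr1.
split; first by left.
case=> d Hd; exfalso.
case: (arg_minnP d (isT : predT ord0)) => i _ imin.
by have := Hd i (g i) (ftot i); rewrite ltnNge imin.
Qed.


Lemma eq_Some (T : eqType) (x y : T) : (Some x == Some y) = (x == y). Proof. by []. Qed.

Lemma sum_delta (R : pzRingType) n (t : 'I_n) (A : pred 'I_n) (G : 'I_n -> R) :
  \sum_j (((j \in A) && (j == t))%:R * G j) = (t \in A)%:R * G t.
Proof.
rewrite (bigD1 t) //= eqxx andbT big1 ?addr0 // => j /negbTE ->.
by rewrite andbF mul0r.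
Qed.

Lemma sum_delta1 (R : pzRingType) n (t : 'I_n) (G : 'I_n -> R) :
  \sum_j ((j == t)%:R * G j) = G t.
Proof.
by rewrite (bigD1 t) //= eqxx mul1r big1 ?addr0 // => j /negbTE ->; rewrite mul0r.
Qed.

Lemma mat_part p (pr : prime p) (V' : {set 'I_p}) (r : 'I_p) (a b : 'I_p -> 'I_p)
    (d : 'I_p -> nat) :
  r \notin V' ->
  (forall j, j \in V' -> (a j \in V' \/ a j = r) /\ (b j \in V' \/ b j = r)) ->
  (forall j, j \in V' -> ((a j + b j) %% p = (2 * j) %% p)%N) ->
  (forall j, j \in V' -> (a j = r \/ (d (a j) < d j)%N) \/ (b j = r \/ (d (b j) < d j)%N)) ->
  (exists j, j \in V') ->
  (p <= expn 2 #|V'|)%N.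
Proof.
move=> rV abV abmod pot [j0 j0V].
rewrite leqNgt; apply/negP => Hlt.
pose tgt j (t : bool) := if t then a j else b j.
pose Rw i t j : int := if i \in V' then ((j == i)%:R - ((j \in V') && (j == tgt i t))%:R)
                       else (if t then 0 else (j == i)%:R).
pose K := \matrix_(i, j) (Rw i false j + Rw i true j).
pose M (pi : {ffun 'I_p -> bool}) := \matrix_(i, j) Rw i (pi i) j.
have dK : \det K = \sum_pi \det (M pi) by rewrite /K det_split.
pose P := [set pi : {ffun 'I_p -> bool} | [forall i, (i \notin V') ==> ~~ pi i]].
have Mout : forall pi, pi \notin P -> \det (M pi) = 0.
  move=> pi; rewrite inE negb_forall => /existsP [i]; rewrite negb_imply negbK.
  case/andP=> iV pii; rewrite (expand_det_row _ i) big1 // => j _.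
  by rewrite mxE /Rw (negbTE iV) pii mul0r.
pose fp (pi : {ffun 'I_p -> bool}) i :=
  if (i \in V') && (tgt i (pi i) \in V') then Some (tgt i (pi i)) else None.
have MIP : forall pi, pi \in P -> M pi = IP (fp pi).
  move=> pi; rewrite inE => /forallP Hpi; apply/matrixP => i j; rewrite !mxE /Rw /fp.
  case iV: (i \in V') => /=; last first.
    by have := Hpi i; rewrite iV /= => /negbTE ->; rewrite eq_sym subr0.
  rewrite eq_sym; case tV: (tgt i (pi i) \in V').
    rewrite eq_Some; case: (j =P tgt i (pi i)) => [->|ne]; first by rewrite tV !eqxx.
    have ne' : (tgt i (pi i) == j) = false by apply/negbTE/eqP => E; apply: ne.
    have ne'' : (j == tgt i (pi i)) = false by apply/negbTE/eqP.
    by rewrite ne' andbF.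
  case: (j =P tgt i (pi i)) => [->|_]; by rewrite ?tV ?andbF.
have Mdet : forall pi, \det (M pi) = 0 \/ \det (M pi) = 1.
  move=> pi; case: (boolP (pi \in P)) => [/MIP ->|/Mout ->]; last by left.
  by case: (IP_det (fp pi)).
pose c pi := nat_of_bool (\det (M pi) == 1).
have Mc : forall pi, \det (M pi) = (c pi)%:R.
  by move=> pi; rewrite /c; case: (Mdet pi) => ->.
pose N := (\sum_pi c pi)%N.
have detK : \det K = N%:R by rewrite dK /N natr_sum; apply: eq_bigr => pi _.
pose pi0 : {ffun 'I_p -> bool} := [ffun i => (i \in V') && ((a i == r) || (d (a i) < d i)%N)].
have pi0P : pi0 \in P.
  by rewrite inE; apply/forallP => i; apply/implyP => iV; rewrite ffunE (negbTE iV).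
have Npos : (0 < N)%N.
  have : \det (M pi0) = 1.
    rewrite MIP //; case: (IP_det (fp pi0)) => _; apply; exists d => i j.
    rewrite /fp; case: ifP => // /andP [iV tV] [<-].
    rewrite /tgt ffunE iV /=; case: ifP => [/orP[/eqP ar|//]|].
      by move: tV; rewrite /tgt ffunE iV /= ar eqxx /= (negbTE rV).
    move/negbT; rewrite negb_or => /andP [nar nlt].
    move: tV; rewrite /tgt ffunE iV /= (negbTE nar) (negbTE nlt) /= => tV.
    case: (pot i iV) => [[ar|lt]|[br|lt]] //.
    - by rewrite ar eqxx in nar.
    - by rewrite lt in nlt.
    - by rewrite br (negbTE rV) in tV.
  move=> M1; rewrite /N (bigD1 pi0) //= /c M1 eqxx //.

have Nle : (N <= expn 2 #|V'|)%N.
  rewrite /N (bigID (mem P)) /= [X in (_ + X)%N]big1 ?addn0; last first.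
    by move=> pi /Mout; rewrite /c => ->.
  apply: (@leq_trans (\sum_(i in P) 1)%N); first by apply: leq_sum => pi _; exact: leq_b1.
  rewrite sum1_card.
  have -> : #|P| = #|pffun_on false V' (predT : pred bool)|.
    apply: eq_card => pi; rewrite inE; apply/forallP/pffun_onP.
      move=> H; split => //; apply/subsetP => i; rewrite inE; apply: contraR => iV.
      by have := H i; rewrite iV /= => /negbTE ->.
    case=> sub _ i; apply/implyP => iV; apply/negP => pii.
    have : i \in false.-support pi by rewrite inE pii.
    by move/(subsetP sub); rewrite (negbTE iV).
  by rewrite card_pffun_on card_bool.
have NltP : (N < p)%N by apply: leq_ltn_trans Nle Hlt.
pose Kp := map_mx (intr : int -> 'F_p) K.
pose y : 'cV['F_p]_p := \col_j (if j \in V' then (j : nat)%:R - (r : nat)%:R else 0).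
pose Y (j : 'I_p) : 'F_p := (j : nat)%:R - (r : nat)%:R.
have Yt : forall j, j \in V' -> forall t,
    (tgt j t \in V')%:R * y (tgt j t) 0 = Y (tgt j t).
  move=> j jV t; rewrite mxE.
  have : tgt j t \in V' \/ tgt j t = r.
    by case: (abV j jV) => Ha Hb; case: t.
  case=> [-> | ->]; first by rewrite mul1r.
  by rewrite (negbTE rV) mul0r /Y subrr.
have Ky : Kp *m y = 0.
  apply/colP => i; rewrite !mxE.
  under eq_bigr => j _ do rewrite !mxE /Rw.
  case iV: (i \in V').
    under eq_bigr => j _ do rewrite rmorphD !rmorphB !rmorph_nat mulrDl !mulrBl.
    rewrite big_split /= !sumrB !sum_delta1 !sum_delta.
    have Yt' : forall k : 'I_p, (k \in V' \/ k = r) ->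
       (k \in V')%:R * (if k \in V' then (k:nat)%:R - (r:nat)%:R else 0)
          = (k:nat)%:R - (r:nat)%:R :> 'F_p.
      move=> k [->|->]; first by rewrite mul1r.
      by rewrite (negbTE rV) mul0r subrr.
    case: (abV i iV) => Ha Hb.
    rewrite !Yt' // iV.
    have H := abmod i iV.
    have H' : ((a i + b i)%N%:R : 'F_p) = (2 * i)%N%:R.
      by rewrite -(Fp_nat_mod pr) H Fp_nat_mod.
    have -> : ((i:nat)%:R - (r:nat)%:R - ((b i : nat)%:R - (r:nat)%:R) + ((i:nat)%:R - (r:nat)%:R - ((a i:nat)%:R - (r:nat)%:R)) : 'F_p)
              = (2 * i)%N%:R - (a i + b i)%N%:R.
      rewrite natrD natrM; ring.
    by rewrite H' subrr.
  under eq_bigr => j _ do rewrite addr0 rmorph_nat.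
  by rewrite sum_delta1 iV.
have := congr1 (mulmx (\adj Kp)) Ky.
rewrite mulmxA mul_adj_mx mulmx0 mul_scalar_mx => /colP/(_ j0).
rewrite !mxE j0V det_map_mx detK rmorph_nat => /eqP; rewrite mulf_eq0 => /orP [] /eqP H.
  have := congr1 (fun x : 'F_p => nat_of_ord x) H; rewrite /= val_Fp_nat // modn_small // => N0.
  by rewrite N0 in Npos.
move/eqP: H; rewrite subr_eq0 => /eqP /(congr1 (fun x : 'F_p => nat_of_ord x)) /=.
rewrite !val_Fp_nat //.
rewrite !modn_small ?ltn_ord // => /val_inj E.
by move: j0V; rewrite E (negbTE rV).
Qed.


Local Close Scope ring_scope.
Lemma key p (pr : prime p) (V : {set 'I_p}) (a b : 'I_p -> 'I_p) :
  (forall j, j \in V -> (a j \in V) && (b j \in V)) ->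
  (forall j, j \in V -> a j != b j) ->
  (forall j, j \in V -> ((a j + b j) %% p = (2 * j) %% p)%N) ->
  V != set0 -> (p <= expn 2 #|V|.-1)%N.
Proof.
move=> abV abne abmod /set0Pn [r0 r0V].
pose e : rel 'I_p := fun j m => (j \in V) && ((m == a j) || (m == b j)).
pose reach j := [set m | connect e j m].
case: (arg_minnP (fun j => #|reach j|) r0V) => r rV rmin.
pose F := reach r.
have clV : closed e V.
  move=> x y /andP [xV /orP [/eqP -> | /eqP ->]]; rewrite xV;
  by case/andP: (abV x xV) => ha hb; rewrite ?ha ?hb.
have FV : forall m, m \in F -> m \in V.
  by move=> m; rewrite inE => /(closed_connect clV) <-.
have back : forall j, j \in F -> connect e j r.
  move=> j jF.
  have sub : reach j \subset F.
    apply/subsetP => m; rewrite !inE; apply: connect_trans; by rewrite inE in jF.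
  have : reach j == F by rewrite eqEcard sub /=; apply: rmin; exact: FV.
  move/eqP => E; have : r \in reach j by rewrite E inE connect0.
  by rewrite inE.
have outF : forall j, j \in F -> (a j \in F) && (b j \in F).
  move=> j jF; have jV := FV j jF; rewrite inE in jF; rewrite !inE.
  by apply/andP; split; apply: (connect_trans jF); apply: connect1; rewrite /e jV eqxx ?orbT.
pose step (S : {set 'I_p}) := S :|: [set j in V | (a j \in S) || (b j \in S)].
pose Rs n := iter n step [set r].
have Rreach : forall s j, path e j s -> last j s = r -> exists n, j \in Rs n.
  elim=> [|m s IH] j /=.
    by move=> _ ->; exists 0%N; rewrite /Rs /= inE.
  case/andP=> ejm es /(IH m es) [n Hn]; exists n.+1.
  rewrite /Rs iterS -/(Rs n) /step !inE; apply/orP; right.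
  case/andP: ejm => -> /orP [/eqP <-|/eqP <-]; by rewrite Hn ?orbT.
have /fin_all_exists [d Hd] : forall j : 'I_p, exists n,
    j \in F -> (j \in Rs n) /\ (forall m, (m < n)%N -> j \notin Rs m).
  move=> j; case: (boolP (j \in F)) => jF; last by exists 0%N.
  have ex : exists n, j \in Rs n.
    by case/connectP: (back j jF) => s es rE; apply: (Rreach s j es); rewrite -rE.
  case: (ex_minnP ex) => n jn nmin; exists n => _; split => // m mn.
  by apply/negP => jm; have := nmin m jm; rewrite leqNgt mn.
pose V' := F :\ r.
have dle : forall y n, y \in F -> y \in Rs n -> (d y <= n)%N.
  move=> y n yF yn; have [_ ymin] := Hd y yF; rewrite leqNgt; apply/negP => lt.
  by have := ymin n lt; rewrite yn.
have pot : forall j, j \in V' ->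
    (a j = r \/ (d (a j) < d j)%N) \/ (b j = r \/ (d (b j) < d j)%N).
  move=> j; rewrite in_setD1 => /andP [jr jF]; have [jn jmin] := Hd j jF.
  case/andP: (outF j jF) => aF bF.
  move: jn jmin; case E: (d j) => [|n] jn jmin.
    by move: jn; rewrite /Rs /= inE (negbTE jr).
  have := jmin n (ltnSn n); move: jn; rewrite /Rs iterS -/(Rs n) /step !inE.
  case/orP => [-> //|/andP [_ /orP [an|bn]]] _.
    by left; right; rewrite ltnS; apply: dle.
  by right; right; rewrite ltnS; apply: dle.
have rF : r \in F by rewrite inE connect0.
have abV' : forall j, j \in V' -> (a j \in V' \/ a j = r) /\ (b j \in V' \/ b j = r).
  move=> j; rewrite in_setD1 => /andP [_ jF]; case/andP: (outF j jF) => aF bF.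
  split; rewrite in_setD1 ?aF ?bF andbT.
    by case: (a j =P r) => [|/eqP]; [right|left].
  by case: (b j =P r) => [|/eqP]; [right|left].
have abmod' : forall j, j \in V' -> ((a j + b j) %% p = (2 * j) %% p)%N.
  by move=> j; rewrite in_setD1 => /andP [_ /FV]; apply: abmod.
have ne : exists j, j \in V'.
  case/andP: (outF r rF) => aF bF.
  case: (a r =P r) => ar.
    exists (b r); rewrite in_setD1 bF andbT; apply/eqP => br.
    by move: (abne r rV); rewrite ar br eqxx.
  by exists (a r); rewrite in_setD1 aF andbT; apply/eqP.
have := mat_part pr (negbT (setD11 r F)) abV' abmod' pot ne.
move/leq_trans; apply; rewrite leq_pexp2l //.
have : (#|F| <= #|V|)%N by apply/subset_leq_card/subsetP.
rewrite (cardsD1 r F) rF add1n => h; rewrite -ltnS prednK //; exact: leq_ltn_trans (leq0n _) h.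
Qed.


Local Open Scope ring_scope.
Delimit Scope nat_scope with N.
Lemma double_inj p (pr : prime p) (po : odd p) (i j : 'I_p) :
  ((2 * i) %% p = (2 * j) %% p)%N -> i = j.
Proof.
move=> H.
have : ((2 * i)%:R : 'F_p) = (2 * j)%:R by rewrite -(Fp_nat_mod pr) H Fp_nat_mod.
have p2 : (2 < p)%N.
  rewrite ltn_neqAle prime_gt1 // andbT; apply/eqP => p2; by rewrite -p2 in po.
rewrite !natrM => /GRing.mulfI H2.
have : (i%:R : 'F_p) = j%:R.
  apply: H2; apply/eqP => /(f_equal (@nat_of_ord _)).
  by rewrite val_Fp_nat // modn_small.
move/(f_equal (@nat_of_ord _)).
by rewrite !val_Fp_nat // !modn_small ?ltn_ord // => /val_inj.
Qed.

Local Close Scope ring_scope.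
Lemma trans_bound p (T : {set triple p}) :
  prime p -> odd p -> latin_transversal p (Bp p) T -> T <> main_diag p ->
  (0 < #|off_diag p T|) /\ (p <= expn 2 (#|off_diag p T|).-1).
Proof.
move=> pr po [TB cardT rowU colU symU] Tne.
have /fin_all_exists [g Hg] : forall i : 'I_p, exists t, [set t0 in T | trow t0 == i] = [set t].
  by move=> i; apply/cards1P/eqP.
have gT : forall i, g i \in T.
  by move=> i; have := set11 (g i); rewrite -Hg inE => /andP [].
have gr : forall i, trow (g i) = i.
  by move=> i; have := set11 (g i); rewrite -Hg inE => /andP [_ /eqP].
have gU : forall t, t \in T -> t = g (trow t).
  move=> t tT; have : t \in [set t0 in T | trow t0 == trow t] by rewrite inE tT eqxx.
  by rewrite Hg inE => /eqP.
have colE : forall t1 t2, t1 \in T -> t2 \in T -> tcol t1 = tcol t2 -> t1 = t2.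
  move=> t1 t2 t1T t2T E; have [t Ht] := cards1P (introT eqP (colU (tcol t1))).
  have : t1 \in [set t0 in T | tcol t0 == tcol t1] by rewrite inE t1T eqxx.
  have : t2 \in [set t0 in T | tcol t0 == tcol t1] by rewrite inE t2T E eqxx.
  by rewrite Ht !inE => /eqP -> /eqP ->.
have symE : forall s, exists2 t, t \in T & tsym t = s.
  move=> s; have [t Ht] := cards1P (introT eqP (symU s)).
  have : t \in [set t0 in T | tsym t0 == s] by rewrite Ht set11.
  by rewrite inE => /andP [tT /eqP ts]; exists t.
have gB : forall t, t \in T -> (tsym t : nat) = (trow t + tcol t) %% p.
  by move=> t /(subsetP TB); rewrite inE => /eqP.
pose c i := tcol (g i).
pose V := [set i | i != c i].
have offE : off_diag p T = g @: V.
  apply/setP => t; rewrite inE; apply/andP/imsetP.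
    case=> tT ne; exists (trow t); last exact: gU.
    by rewrite inE /c -gU.
  case=> i; rewrite inE /c => ne ->; split => //; by rewrite gr.
have cardV : #|off_diag p T| = #|V|.
  by rewrite offE card_imset //; apply: (can_inj gr).
have F1 : forall i, i \in V -> c i \in V.
  move=> i; rewrite !inE => ne; apply/negP => /eqP E.
  have : g i = g (c i) by apply: colE => //; rewrite -/(c (c i)) -E.
  by move/(congr1 trow); rewrite !gr => E'; rewrite -E' eqxx in ne.
have F2 : forall j : 'I_p, exists i : 'I_p, j \in V -> (i \in V) /\ ((i + c i) %% p = (2 * j) %% p).
  move=> j; have [t tT ts] := symE (Ordinal (ltn_pmod (2 * j) (prime_gt0 pr))).
  exists (trow t) => jV.
  have symi : (trow t + c (trow t)) %% p = (2 * j) %% p.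
    by rewrite /c -gU // -gB // ts.
  split => //; rewrite inE; apply/negP => /eqP ci.
  move: symi; rewrite -ci addnn -mul2n => /(double_inj pr po) E.
  by move: jV; rewrite -E inE -ci eqxx.
have [a Ha] := fin_all_exists F2.
have Vne : V != set0.
  apply/negP => /eqP V0; apply: Tne; apply/eqP; rewrite eqEcard; apply/andP; split.
    apply/subsetP => t tT; rewrite inE (subsetP TB t tT).
    have : trow t \notin V by rewrite V0 inE.
    by rewrite inE negbK /c -gU // => /eqP ->.
  rewrite cardT -[X in (_ <= X)%N]card_ord; apply: (@leq_card_in _ _ trow) => t1 t2.
  rewrite !inE => /andP [/eqP s1 /eqP rc1] /andP [/eqP s2 /eqP rc2] E.
  move: s1 s2 rc1 rc2 E; case: t1 => [[r1 c1] s1]; case: t2 => [[r2 c2] s2].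
  rewrite /trow /tcol /tsym /= => e1 e2 rc1 rc2 E.
  have Ec : c1 = c2 by rewrite -rc1 -rc2.
  have Es : s1 = s2 by apply: ord_inj; rewrite e1 e2 E Ec.
  by rewrite E Ec Es.
have := key pr (a := a) (b := fun j => c (a j)) (V := V).
rewrite cardV card_gt0 Vne; move=> H; split => //; apply: H => // j jV; case: (Ha j jV) => aV am.
- by rewrite aV F1.
- by move: aV; rewrite inE eq_sym.
- exact: am.
Qed.

End Aux.

Theorem corollary6p2 (p : nat) (T : {set triple p}) :
  prime p -> odd p ->
  latin_transversal p (Bp p) T ->
  T <> main_diag p ->
  (ln (INR p) / ln 2 + 1 <= INR #|off_diag p T|)%R.
Proof.
move=> pr po tr ne.
have [kpos H] := Aux.trans_bound pr po tr ne.
move: kpos H; set k := #|off_diag p T| => kpos H.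
have p0 : (0 < INR p)%R by apply: lt_0_INR; apply/ltP; exact: prime_gt0.
have l2 : (0 < ln 2)%R by rewrite -ln_1; apply: ln_increasing; lra.
have pw : forall n, INR (expn 2 n) = (2 ^ n)%R.
  elim=> [|n IH] //; rewrite expnS mult_INR IH /=; lra.
have Hp : (INR p <= 2 ^ k.-1)%R by rewrite -pw; apply: le_INR; apply/leP.
have Hl : (ln (INR p) <= INR k.-1 * ln 2)%R.
  rewrite -ln_pow; last lra.
  case: (Rle_lt_or_eq_dec _ _ Hp) => [lt|->]; last exact: Rle_refl.
  by apply: Rlt_le; apply: ln_increasing.
have Hd : (ln (INR p) / ln 2 <= INR k.-1)%R.
  rewrite /Rdiv; apply: (Rle_trans _ (INR k.-1 * ln 2 * / ln 2)).
    apply: Rmult_le_compat_r => //; apply: Rlt_le; apply: Rinv_0_lt_compat; lra.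
  rewrite Rmult_assoc Rinv_r ?Rmult_1_r; [exact: Rle_refl | lra].
have -> : INR k = (INR k.-1 + 1)%R by rewrite -S_INR prednK.
lra.
Qed.
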